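(* Let $\kappa$ be a field, $r,k\ge1$, $s_1,\dots,s_k\ge0$ integers, $\Gamma$ the complete bipartite supernova quiver with these parameters and $\boldsymbol\mu=(\mu^1,\dots,\mu^k)$ a $k$-tuple of nonzero partitions, $\mu^i=(\mu^i_1\ge\cdots\ge\mu^i_{s_i+1}\ge0)$, with $r\ge|\mu^i|+\mu^i_1$ for all $i$. Let $\boldsymbol\varphi$ be an indecomposable representation of $\Gamma$ over $\kappa$ of dimension vector $\mathbf{v}_{\boldsymbol\mu}$. Then (i) the maps $\varphi_\gamma$, for $\gamma$ running over the arrows $(i;j)\to(i;j-1)$ ($1\le i\le k$, $1\le j\le s_i$) of the long legs, are all injective; and (ii) for each $i=1,\dots,k$, the images of the maps $\varphi_{(l)\to(i;0)}$, $l=1,\dots,r$, span $V^{\boldsymbol\varphi}_{(i;0)}$.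
   Context: $\Gamma$ has vertices $(l)$, $l=1,\dots,r$, and $(i;j)$, $i=1,\dots,k$, $j=0,\dots,s_i$; arrows: one arrow $(l)\to(i;0)$ for each $l,i$ and one arrow $(i;j)\to(i;j-1)$ for $1\le j\le s_i$. $\mathbf{v}_{\boldsymbol\mu}$: $v_{(l)}=1$, $v_{(i;0)}=|\mu^i|$, $v_{(i;j)}=|\mu^i|-\sum_{f=1}^j\mu^i_f$. A representation $\boldsymbol\varphi$ consists of $\kappa$-vector spaces $V^{\boldsymbol\varphi}_a$ ($a$ a vertex) of dimensions $v_a$ and linear maps $\varphi_\gamma:V^{\boldsymbol\varphi}_{t(\gamma)}\to V^{\boldsymbol\varphi}_{h(\gamma)}$ for each arrow $\gamma$; it is indecomposable if it is nonzero and not isomorphic to a direct sum of two nonzero representations. *)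

(* Defs.v *)
From HB Require Import structures.
From mathcomp Require Import all_boot all_order all_algebra.
Set Implicit Arguments. Unset Strict Implicit. Unset Printing Implicit Defensive.
Import GRing.Theory.
Local Open Scope ring_scope.

(* A quiver is given by a vertex type V, an arrow type A and tail/head maps.
   The space at vertex a is kappa^(rdim a) (row vectors); the linear map of an
   arrow g : t g -> h g is x |-> x *m map g. *)
Record rep (K : fieldType) (V A : Type) (t h : A -> V) := Rep {
  rdim : V -> nat;
  rmap : forall g : A, 'M[K]_(rdim (t g), rdim (h g))
}.

Section RepDefs.
Variables (K : fieldType) (V A : Type) (t h : A -> V).

Definition rep_nonzero (p : rep K t h) : Prop := exists a : V, (0 < rdim p a)%N.

Definition rep_dsum (p q : rep K t h) : rep K t h :=
  @Rep K V A t h (fun a => (rdim p a + rdim q a)%N)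
    (fun g => block_mx (rmap p g) 0 0 (rmap q g)).

Definition rep_iso (p q : rep K t h) : Prop :=
  exists (f : forall a, 'M[K]_(rdim p a, rdim q a))
         (f' : forall a, 'M[K]_(rdim q a, rdim p a)),
    [/\ forall a, f a *m f' a = 1%:M,
        forall a, f' a *m f a = 1%:M &
        forall g, rmap p g *m f (h g) = f (t g) *m rmap q g].

Definition indecomposable (p : rep K t h) : Prop :=
  rep_nonzero p /\
  ~ (exists q1 q2 : rep K t h,
        [/\ rep_nonzero q1, rep_nonzero q2 & rep_iso p (rep_dsum q1 q2)]).
End RepDefs.

(* Vertices (l), l in 'I_r (0-indexed) and (i;j), i in 'I_k, j in 'I_(s i).+1. *)
Inductive sn_vertex (r k : nat) (s : 'I_k -> nat) : Type :=
| VL of 'I_r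
| VI (i : 'I_k) of 'I_(s i).+1.

Arguments sn_vertex : clear implicits.
Arguments VL {r k} s _.
Arguments VI {r k s} i _.

Inductive sn_arrow (r k : nat) (s : 'I_k -> nat) : Type :=
| AL of 'I_r & 'I_k
| AI (i : 'I_k) of 'I_(s i).

Arguments sn_arrow : clear implicits.
Arguments AL {r k} s _ _.
Arguments AI {r k s} i _.

Definition sn_tail r k s (g : sn_arrow r k s) : sn_vertex r k s :=
  match g with
  | AL l _ => VL s l
  | AI i j => VI i (lift ord0 j)
  end.

Definition sn_head r k s (g : sn_arrow r k s) : sn_vertex r k s :=
  match g with
  | AL _ i => VI i (@ord0 (s i))
  | AI i j => VI i (widen_ord (leqnSn (s i)) j)
  end.

Definition sn_rep (K : fieldType) r k s := rep K (@sn_tail r k s) (@sn_head r k s).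

(* |mu^i| for mu^i = (mu^i_1,...,mu^i_{s_i+1}) stored 0-indexed *)
Definition psize (n : nat) (m : 'I_n -> nat) : nat := (\sum_(f < n) m f)%N.

Definition is_partition (n : nat) (m : 'I_n -> nat) : Prop :=
  forall f1 f2 : 'I_n, (f1 <= f2)%N -> (m f2 <= m f1)%N.

Definition vmu r k s (mu : forall i : 'I_k, 'I_(s i).+1 -> nat)
  (a : sn_vertex r k s) : nat :=
  match a with
  | VL _ => 1%N
  | VI i j => (psize (mu i) - \sum_(f < (s i).+1 | (f < j)%N) mu i f)%N
  end.

(* Main.v *)
Require Import Defs.
From HB Require Import structures.
From mathcomp Require Import all_boot all_order all_algebra.
Import GRing.Theory.
Local Open Scope ring_scope.

Set Implicit Arguments. Unset Strict Implicit. Unset Printing Implicit Defensive.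
Section Idem.
Variables (K : fieldType) (V A : Type) (t h : A -> V).
Variable p : rep K t h.
Variable e : forall a, 'M[K]_(rdim p a).
Hypothesis eI : forall a, e a *m e a = e a.
Hypothesis eC : forall g, rmap p g *m e (h g) = e (t g) *m rmap p g.

Local Notation B a := (row_base (e a)).

Lemma B_e a : B a *m e a = B a.
Proof.
have /submxP[X ->] : (B a <= e a)%MS by rewrite eq_row_base.
by rewrite -mulmxA eI.
Qed.

Lemma e_B a : (e a <= B a)%MS.
Proof. by rewrite eq_row_base. Qed.

Definition subrep : rep K t h :=
  @Rep K V A t h (fun a => \rank (e a))
    (fun g => B (t g) *m rmap p g *m pinvmx (B (h g))).

Lemma BM_sub g : (B (t g) *m rmap p g <= B (h g))%MS.
Proof.
rewrite eq_row_base -(B_e (t g)) -mulmxA -eC mulmxA; exact: submxMl.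
Qed.

Lemma subrep_comm g : rmap subrep g *m B (h g) = B (t g) *m rmap p g.
Proof. by rewrite /= mulmxKpV // BM_sub. Qed.
End Idem.

Lemma scalar1_neq0 (K : fieldType) n : (0 < n)%N -> (1%:M : 'M[K]_n) != 0.
Proof.
case: n => // n _; apply/eqP => /matrixP/(_ ord0 ord0); rewrite !mxE /=.
by move/eqP; rewrite oner_eq0.
Qed.

Section Decomp.
Variables (K : fieldType) (V A : Type) (t h : A -> V).
Variable p : rep K t h.
Variable e : forall a, 'M[K]_(rdim p a).
Hypothesis eI : forall a, e a *m e a = e a.
Hypothesis eC : forall g, rmap p g *m e (h g) = e (t g) *m rmap p g.

Definition e' a : 'M[K]_(rdim p a) := 1%:M - e a.
Lemma e'I a : e' a *m e' a = e' a.
Proof. by rewrite /e' mulmxBl mul1mx mulmxBr mulmx1 eI subrr subr0. Qed.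
Lemma e'C g : rmap p g *m e' (h g) = e' (t g) *m rmap p g.
Proof. by rewrite /e' mulmxBr mulmxBl mulmx1 mul1mx eC. Qed.

Lemma Be_0 a : row_base (e a) *m e' a = 0.
Proof. by rewrite /e' mulmxBr mulmx1 B_e ?subrr. Qed.
Lemma Be'_0 a : row_base (e' a) *m e a = 0.
Proof.
have /submxP[X ->] : (row_base (e' a) <= e' a)%MS by rewrite eq_row_base.
by rewrite -mulmxA /e' mulmxBl mul1mx eI subrr mulmx0.
Qed.

Lemma idem_not_indec :
  (exists a, e a != 0) -> (exists a, e' a != 0) -> ~ indecomposable p.
Proof.
move=> [a1 H1] [a2 H2] [_]; apply.
exists (subrep e), (subrep e'); split.
- by exists a1; rewrite /= lt0n mxrank_eq0.
- by exists a2; rewrite /= lt0n mxrank_eq0.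
pose f' a := col_mx (row_base (e a)) (row_base (e' a)).
pose f a := row_mx (e a *m pinvmx (row_base (e a))) (e' a *m pinvmx (row_base (e' a))).
have ff' a : f a *m f' a = 1%:M.
  rewrite mul_row_col !mulmxKpV ?e_B //.
  by rewrite /e' addrC subrK.
have f'f a : f' a *m f a = 1%:M.
  rewrite mul_col_row (mulmxA (row_base (e a)) (e a)) (mulmxA (row_base (e a)) (e' a)).
  rewrite (mulmxA (row_base (e' a)) (e a)) (mulmxA (row_base (e' a)) (e' a)).
  rewrite (B_e eI) (B_e e'I) Be_0 Be'_0 !mul0mx !mulmxVp ?row_base_free //.
  by rewrite -scalar_mx_block.
exists f, f'; split => // g.
have H : f' (t g) *m rmap p g = rmap (rep_dsum (subrep e) (subrep e')) g *m f' (h g).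
  rewrite /= mul_col_mx mul_block_col !mul0mx addr0 add0r.
  by rewrite !mulmxKpV ?(BM_sub eI eC) ?(BM_sub e'I e'C).
rewrite -[LHS]mul1mx -(ff' (t g)) -mulmxA (mulmxA _ (rmap p g)) H.
by rewrite -!mulmxA f'f mulmx1.
Qed.
End Decomp.
Lemma castmx_mulmx (K : fieldType) m m' n n' q q' (e1 : m = m') (e2 : n = n') (e3 : q = q')
  (X : 'M[K]_(m, n)) (Y : 'M[K]_(n, q)) :
  castmx (e1, e2) X *m castmx (e2, e3) Y = castmx (e1, e3) (X *m Y).
Proof. by case: m' / e1; case: n' / e2; case: q' / e3. Qed.

Section Leg.
Variables (K : fieldType) (r k : nat) (s : 'I_k -> nat).
Variable p : @sn_rep K r k s.
Variable i : 'I_k.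

Definition ord_of (n : nat) : 'I_(s i).+1 := if n is n'.+1 then inord n'.+1 else ord0.

Lemma val_ord_of n : (n <= s i)%N -> val (ord_of n) = n.
Proof. by case: n => // n H; rewrite /= inordK. Qed.

Definition D n := rdim p (VI i (ord_of n)).

Lemma eqT (j : 'I_(s i)) : rdim p (VI i (lift ord0 j)) = D j.+1.
Proof.
rewrite /D; congr (rdim p (VI i _)); apply: val_inj.
by rewrite /= inordK ?ltnS // lift0.
Qed.

Lemma eqH (j : 'I_(s i)) : rdim p (VI i (widen_ord (leqnSn (s i)) j)) = D j.
Proof.
rewrite /D; congr (rdim p (VI i _)); apply: val_inj.
by rewrite val_ord_of // ltnW.
Qed.

Definition Am_aux (n : nat) (b : bool) : (n < s i)%N = b -> 'M[K]_(D n.+1, D n) :=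
  if b as b0 return ((n < s i)%N = b0 -> 'M[K]_(D n.+1, D n)) then fun H =>
    castmx (eqT (Ordinal H), eqH (Ordinal H)) (rmap p (AI i (Ordinal H)))
  else fun _ => 0.

Definition Am (n : nat) : 'M[K]_(D n.+1, D n) := Am_aux (erefl (n < s i)%N).

Lemma Am_aux_true n b (E : (n < s i)%N = b) (H : (n < s i)%N) :
  Am_aux E = castmx (eqT (Ordinal H), eqH (Ordinal H)) (rmap p (AI i (Ordinal H))).
Proof.
case: b E => E /=; first by rewrite (bool_irrelevance E H).
by rewrite H in E.
Qed.

Lemma A_val (j : 'I_(s i)) : Am j = castmx (eqT j, eqH j) (rmap p (AI i j)).
Proof.
case: j => j Hj; by rewrite /Am (Am_aux_true _ Hj).
Qed.

Definition eqV (i' : 'I_k) (n : 'I_(s i').+1) (H : i' = i) :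
  D n = rdim p (VI i' n).
Proof.
subst i'; rewrite /D; congr (rdim p (VI i _)); apply: val_inj.
by rewrite val_ord_of // -ltnS.
Qed.

Variable E : forall n, 'M[K]_(D n).

Definition ev (a : sn_vertex r k s) : 'M[K]_(rdim p a) :=
  match a with
  | VL _ => 0
  | VI i' n => if i' =P i is ReflectT H then castmx (eqV n H, eqV n H) (E n) else 0
  end.

Lemma ev_VI (n : 'I_(s i).+1) (m : nat) (Hm : val n = m) (pm : D m = rdim p (VI i n)) :
  ev (VI i n) = castmx (pm, pm) (E m).
Proof.
rewrite /ev; case: eqP => // H.
subst m; congr castmx; congr pair; apply: eq_irrelevance.
Qed.

Lemma ev_VIn (i' : 'I_k) (n : 'I_(s i').+1) : i' != i -> ev (VI i' n) = 0.
Proof. by rewrite /ev; case: eqP. Qed.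

Hypothesis EI : forall n, E n *m E n = E n.
Hypothesis EC : forall n, (n < s i)%N -> Am n *m E n = E n.+1 *m Am n.
Hypothesis EL : forall l, rmap p (AL s l i) *m E 0 = 0.
Hypothesis Enz : exists n, (n <= s i)%N /\ E n != 0.
Hypothesis rpos : (0 < r)%N.
Hypothesis VLpos : forall l, (0 < rdim p (VL s l))%N.

Lemma leg_not_indec : ~ indecomposable p.
Proof.
apply: (@idem_not_indec _ _ _ _ _ p ev).
- case=> [l|i' n]; first by rewrite mulmx0.
  case: (eqVneq i' i) => [Hi|Hi]; last by rewrite ev_VIn // mulmx0.
  subst i'.
  rewrite (ev_VI (erefl _) (eqV n (erefl i))) castmx_mulmx EI //.
- case=> [l i'|i' j].
    case: (eqVneq i' i) => [Hi|Hi]; last by rewrite ev_VIn // mulmx0 mul0mx.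
    subst i'; rewrite (ev_VI (erefl _) (erefl _)) castmx_id EL mul0mx //.
  case: (eqVneq i' i) => [Hi|Hi]; last by rewrite !ev_VIn // mulmx0 mul0mx.
  subst i'.
  rewrite (@ev_VI (widen_ord (leqnSn (s i)) j) j erefl (esym (eqH j))).
  rewrite (@ev_VI (lift ord0 j) j.+1 (lift0 _) (esym (eqT j))).
  apply: (can_inj (castmxK (eqT j) (eqH j))).
  rewrite -(castmx_mulmx _ (eqH j)) -(castmx_mulmx _ (eqT j)) !castmxKV -A_val.
  exact: EC.
- case: Enz => n [Hn Hnz]; exists (VI i (ord_of n)).
  by rewrite (ev_VI (val_ord_of Hn) (erefl _)) castmx_id.
- have l : 'I_r := Ordinal rpos.
  exists (VL s l); rewrite /e' /= subr0; exact: scalar1_neq0.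
Qed.
End Leg.
Section Chain.
Variables (K : fieldType) (D : nat -> nat).
Variable A : forall k, 'M[K]_(D k.+1, D k).

Fixpoint Comp (a b : nat) {struct b} : 'M[K]_(D b, D a) :=
  match b with
  | 0 => conform_mx 0 (1%:M : 'M[K]_(D a))
  | b'.+1 => if (a <= b')%N then A b' *m Comp a b' else conform_mx 0 (1%:M : 'M[K]_(D a))
  end.

Lemma Comp_id a : Comp a a = 1%:M.
Proof. by case: a => [|a] /=; rewrite ?ltnn conform_mx_id. Qed.

Lemma CompS a b : (a <= b)%N -> Comp a b.+1 = A b *m Comp a b.
Proof. by move=> H /=; rewrite H. Qed.

Lemma Comp_trans a b c : (a <= b)%N -> (b <= c)%N -> Comp b c *m Comp a b = Comp a c.
Proof.
move=> Hab; elim: c => [|c IH] Hbc.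
  move: Hbc; rewrite leqn0 => /eqP Eb; subst b.
  by move: Hab; rewrite leqn0 => /eqP ->; rewrite Comp_id mul1mx.
move: Hbc; rewrite leq_eqVlt => /orP [/eqP <-|Hbc]; first by rewrite Comp_id mul1mx.
by rewrite !CompS // ?(leq_trans Hab Hbc) // -mulmxA IH.
Qed.

Variables (S c T : nat) (w : 'rV[K]_(D T)) (f : 'cV[K]_(D c)).
Hypothesis HcT : (c <= T)%N.
Hypothesis HTS : (T <= S)%N.
Hypothesis Hvf : w *m Comp c T *m f = 1%:M.
Hypothesis Htop : (T < S)%N -> Comp c T.+1 *m f = 0.

Definition E k : 'M[K]_(D k) :=
  if (c <= k <= T)%N then (Comp c k *m f) *m (w *m Comp k T) else 0.

Lemma psiphi k : (c <= k <= T)%N -> (w *m Comp k T) *m (Comp c k *m f) = 1%:M.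
Proof.
case/andP=> H1 H2.
by rewrite -!mulmxA (mulmxA (Comp k T)) Comp_trans // mulmxA.
Qed.

Lemma E_idem k : E k *m E k = E k.
Proof.
rewrite /E; case: ifP => H; last by rewrite mulmx0.
by rewrite mulmxA -(mulmxA (Comp c k *m f)) psiphi // mulmx1.
Qed.

Lemma E_comm k : (k < S)%N -> k.+1 != c -> A k *m E k = E k.+1 *m A k.
Proof.
move=> HkS Hkc; rewrite /E.
case: (leqP c k) => Hck.
  rewrite (leq_trans Hck (leqnSn k)) !andTb.
  case: (ltnP k T) => HkT.
    rewrite (ltnW HkT) !mulmxA -CompS //.
    rewrite -!mulmxA; congr (_ *m (_ *m _)).
    by rewrite -(Comp_trans (leqnSn k) HkT) CompS // Comp_id mulmx1.
  rewrite mul0mx.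
  case: (leqP k T) => HkT'; last by rewrite mulmx0.
  have EkT : k = T by apply/eqP; rewrite eqn_leq HkT HkT'.
  subst k.
  by rewrite !mulmxA -CompS // Htop // !mul0mx.
rewrite andFb mulmx0.
have -> : (c <= k.+1)%N = false.
  by apply/negbTE; rewrite -ltnNge ltn_neqAle Hkc Hck.
by rewrite mul0mx.
Qed.

Lemma E_c : E c = f *m (w *m Comp c T).
Proof. by rewrite /E leqnn HcT /= Comp_id mul1mx. Qed.

Lemma E_c_neq0 : E c != 0.
Proof.
rewrite E_c; apply/eqP => H.
have : (w *m Comp c T) *m (f *m (w *m Comp c T)) *m f = 0 by rewrite H mulmx0 mul0mx.
rewrite mulmxA Hvf mul1mx Hvf => /eqP; rewrite -[1%:M]/(1 : 'M[K]_1) oner_eq0 //.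
Qed.
End Chain.

From mathcomp Require Import zify.
From Stdlib Require Import Classical.

Lemma ex_max (P : nat -> Prop) c S : (c <= S)%N -> P c ->
  exists T, [/\ (c <= T <= S)%N, P T & forall T', (T < T' <= S)%N -> ~ P T'].
Proof.
move=> HcS Pc.
suff H : forall d, exists T, [/\ (c <= T <= c + d)%N, P T & forall T', (T < T' <= c + d)%N -> ~ P T'].
  by have := H (S - c)%N; rewrite subnKC.
elim=> [|d [T [H1 H2 H3]]].
  exists c; split => //; first by rewrite addn0 leqnn.
  move=> T'; rewrite addn0 => /andP [a b]; lia.
case: (classic (P (c + d.+1)%N)) => Hp.
  exists (c + d.+1)%N; split => //; first by apply/andP; split; lia.
  move=> T' /andP [a b]; lia.
exists T; split => //; first by move: H1 => /andP [a b]; apply/andP; split; lia.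
move=> T' /andP [a b].
case: (eqVneq T' (c + d.+1)%N) => [->|Hne] //.
apply: H3; apply/andP; split => //; lia.
Qed.

Lemma sep_lemma (K : fieldType) m n (v : 'rV[K]_n) (B : 'M[K]_(m, n)) :
  ~~ (v <= B)%MS -> exists f : 'cV[K]_n, v *m f = 1%:M /\ B *m f = 0.
Proof.
rewrite submxE => Hu.
set u := v *m cokermx B in Hu.
have [j Hj] : exists j, u 0 j != 0.
  apply/not_all_not_ex => H; move/eqP: Hu; apply; apply/matrixP => a b.
  rewrite ord1 [RHS]mxE; have := H b; by move/negP/negPn/eqP.
exists (cokermx B *m ((u 0 j)^-1 *: delta_mx j 0)); split.
  rewrite mulmxA -/u -scalemxAr -colE; apply/matrixP => a b.
  rewrite !ord1 [RHS]mxE eqxx mxE [col _ _ _ _]mxE mulVf //.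
by rewrite mulmxA mulmx_coker mul0mx.
Qed.

Theorem proposition3p8 (K : fieldType) (r k : nat) (s : 'I_k -> nat)
  (mu : forall i : 'I_k, 'I_(s i).+1 -> nat) :
  (0 < r)%N -> (0 < k)%N ->
  (forall i, is_partition (mu i)) ->
  (forall i, (0 < psize (mu i))%N) ->
  (forall i, (psize (mu i) + mu i ord0 <= r)%N) ->
  forall phi : @sn_rep K r k s,
  (forall a, rdim phi a = vmu mu a) ->
  indecomposable phi ->
  (forall (i : 'I_k) (j : 'I_(s i)),
      injective (fun x : 'rV[K]_(rdim phi (VI i (lift ord0 j))) =>
                   x *m rmap phi (AI i j))) /\
  (forall (i : 'I_k) (x : 'rV[K]_(rdim phi (VI i (@ord0 (s i))))),
      exists y : forall l : 'I_r, 'rV[K]_(rdim phi (VL s l)),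
        x = \sum_(l < r) (y l *m rmap phi (AL s l i)
                           : 'rV[K]_(rdim phi (VI i (@ord0 (s i)))))).
Proof.
move=> rpos _ _ _ _ phi Hdim Hind.
have VLpos : forall l, (0 < rdim phi (VL s l))%N by move=> l; rewrite Hdim.
split.
- move=> i j x1 x2 Heq /=.
  apply: NNPP => Hne; move: Hind.
  pose A := Am phi i.
  pose c := j.+1.
  pose x0 := castmx (erefl 1%N, eqT phi j) (x1 - x2).
  have Hx0 : x0 *m A j = 0.
    rewrite /A A_val castmx_mulmx mulmxBl Heq subrr.
    by apply/matrixP => a b; rewrite castmxE !mxE.
  have Hx0nz : x0 != 0.
    apply/eqP => H0; apply: Hne; apply/eqP; rewrite -subr_eq0; apply/eqP.
    by rewrite -(castmxK (erefl 1%N) (eqT phi j) (x1 - x2)) -/x0 H0; apply/matrixP => a b; rewrite castmxE !mxE.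
  have Hcs : (c <= s i)%N by exact: ltn_ord.
  pose Q T := exists w : 'rV[K]_(D phi i T),
     (w *m Comp A c T != 0) /\ (w *m Comp A c T *m A j = 0).
  have Qc : Q c by exists x0; rewrite Comp_id mulmx1.
  have [T [/andP [HcT HTS] [w [Hv0 HvA]] Hmax]] := ex_max Hcs Qc.
  set v := w *m Comp A c T in Hv0 HvA.
  have [f [Hvf Htop]] : exists f : 'cV[K]_(D phi i c),
      v *m f = 1%:M /\ ((T < s i)%N -> Comp A c T.+1 *m f = 0).
    case: (ltnP T (s i)) => HT.
      have /sep_lemma [f [H1 H2]] : ~~ (v <= Comp A c T.+1)%MS.
        apply/negP => /submxP [y Hy].
        apply: (Hmax T.+1); first by rewrite ltnSn HT.
        by exists y; rewrite -Hy; split.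
      by exists f.
    have /sep_lemma [f [H1 H2]] : ~~ (v <= (0 : 'M[K]_(D phi i c)))%MS by rewrite submx0.
    by exists f; split => // H; move: HT; rewrite leqNgt H.
  apply: (@leg_not_indec _ _ _ _ phi i (@E _ _ A c T w f)) => //.
  + exact: E_idem.
  + move=> n Hn.
    case: (eqVneq n.+1 c) => Hnc; last exact: (E_comm w Htop Hn Hnc).
    have Enj : n = j by case: Hnc.
    subst n.
    rewrite (@E_c _ _ _ c T) // -mulmxA HvA mulmx0.
    by rewrite /E ltnn andFb mulmx0.
  + by move=> l; rewrite /E /= mulmx0.
  + by exists c; split => //; apply: E_c_neq0.
- move=> i x.
  apply: NNPP => Hno; move: Hind.
  pose A := Am phi i.
  pose U := (\sum_(l < r) <<(rmap phi (AL s l i) : 'M[K]_(rdim phi (VL s l), D phi i 0))>>)%MS.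
  have HxU : ~~ (x <= U)%MS.
    apply/negP => /sub_sumsmxP [u Hu]; apply: Hno.
    exists (fun l => u l *m (<<rmap phi (AL s l i)>>%MS *m pinvmx (rmap phi (AL s l i)))).
    rewrite Hu; apply: eq_bigr => l _.
    rewrite -mulmxA mulmxKpV //; by rewrite genmxE.
  pose Q T := ~~ (Comp A 0 T <= U)%MS.
  have Q0 : Q 0%N.
    apply/negP => H; move/negP: HxU; apply.
    by apply: submx_trans H; rewrite Comp_id submx1.
  have [T [/andP [_ HTS] QT Hmax]] := @ex_max (fun T => is_true (Q T)) 0%N (s i) (leq0n (s i)) Q0.
  have /row_subPn [i0 Hi0] := QT.
  pose w := (delta_mx 0 i0 : 'rV[K]_(D phi i T)).
  have Hv : ~~ (w *m Comp A 0 T <= U)%MS by rewrite /w -rowE.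
  have [f [Hvf HUf]] := sep_lemma Hv.
  have Htop : (T < s i)%N -> Comp A 0 T.+1 *m f = 0.
    move=> HT.
    have : (Comp A 0 T.+1 <= U)%MS.
      apply: negbNE; apply/negP => H; apply: (Hmax T.+1) => //.
      by rewrite ltnSn HT.
    by case/submxP => X ->; rewrite -mulmxA HUf mulmx0.
  apply: (@leg_not_indec _ _ _ _ phi i (@E _ _ A 0 T w f)) => //.
  + exact: E_idem.
  + by move=> n Hn; apply: (E_comm w Htop Hn).
  + move=> l; rewrite (@E_c _ _ _ 0 T) //.
    have : (rmap phi (AL s l i) <= U)%MS.
      by apply: (sumsmx_sup l) => //; rewrite genmxE.
    by case/submxP => X ->; rewrite !mulmxA -(mulmxA X) HUf mulmx0 !mul0mx.
  + by exists 0%N; split => //; apply: E_c_neq0.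
Qed.
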